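(* In the setting below, the map $\bar{\phi}\colon D(\mathcal{A})/D(\mathcal{A}')\to D(\widetilde{\mathcal{A}''})$ is a quasi-isomorphism: it commutes with the differentials, lowers degrees by $2\operatorname{codim}x_0-1$, and induces an isomorphism in cohomology.
   Context: A complex subspace arrangement in $\mathbb{C}^l$ is a finite set of complex linear subspaces of $\mathbb{C}^l$ with no two distinct members $x\subset y$. For a finite set $\mathcal{C}$ of linear subspaces of a complex vector space $W$ with a linear order, $D(\mathcal{C})$ is the cochain complex over $\mathbb{Q}$ with basis all subsets $\sigma\subseteq\mathcal{C}$, where with $\vee\sigma=\bigcap_{x\in\sigma}x$ ($\vee\emptyset=W$), $\deg\sigma=2\operatorname{codim}_W(\vee\sigma)-|\sigma|$ and for $\sigma=\{x_{i_1},\dots,x_{i_r}\}$ in increasing order, $d\sigma=\sum_{j:\vee(\sigma\setminus\{x_{i_j}\})=\vee\sigma}(-1)^j(\sigma\setminus\{x_{i_j}\})$. Setting: $\mathcal{A}=\{x_0,\dots,x_n\}$ is a complex subspace arrangement in $\mathbb{C}^l$, $\mathcal{A}'=\mathcal{A}\setminus\{x_0\}$; on $\mathcal{A}'$, $y\sim z$ iff $x_0\cap y=x_0\cap z$, with classes $\mathcal{A}_1,\dots,\mathcal{A}_r$; the linear order is $x_0<x_1<\dots<x_n$ with elements of $\mathcal{A}_i$ preceding elements of $\mathcal{A}_j$ whenever $i<j$. $D(\mathcal{A}')$ is the subcomplex of $D(\mathcal{A})$ spanned by subsets not containing $x_0$. $\widetilde{\mathcal{A}''}=\{x_0\cap y\mid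 y\in\mathcal{A}'\}$, ordered by the order of the corresponding classes, and $D(\widetilde{\mathcal{A}''})$ is formed with ambient space $W=x_0$ (codimensions taken in $x_0$). $E=\{(y,z)\in\mathcal{A}'\times\mathcal{A}'\mid y\sim z,\ y\ne z\}$. The linear map $\phi\colon D(\mathcal{A})\to D(\widetilde{\mathcal{A}''})$ is: $\phi(\sigma)=0$ if $x_0\notin\sigma$ or if $x_0\in\sigma$ and $\{y,z\}\subseteq\sigma$ for some $(y,z)\in E$; otherwise, for $\sigma=\{x_0,x_{i_1},\dots,x_{i_r}\}$, $\phi(\sigma)=(-1)^r\{x_0\cap x_{i_1},\dots,x_0\cap x_{i_r}\}$. It vanishes on $D(\mathcal{A}')$ and $\bar\phi$ is the induced map on $D(\mathcal{A})/D(\mathcal{A}')$. $\operatorname{codim}x_0$ is the complex codimension of $x_0$ in $\mathbb{C}^l$. *)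

(* Defs.v *)
From mathcomp Require Import all_boot all_algebra.
From mathcomp Require Import Rstruct complex.

Set Implicit Arguments.
Unset Strict Implicit.
Unset Printing Implicit Defensive.
Import GRing.Theory.
Local Open Scope ring_scope.

Definition CC : fieldType := Rdefinitions.R[i].

Notation subspace l := {vspace 'rV[CC]_l}.

(** A finite family of subspaces indexed by 'I_m (the linear order is the
    order of the indices); the cochain complex D(C) over Q has basis the
    subsets of the index set, so a cochain is a rational-valued function on
    subsets. *)
Definition Dcx (m : nat) := {ffun {set 'I_m} -> rat}.

Definition vee l m (W : subspace l) (f : 'I_m -> subspace l) (s : {set 'I_m})
  : subspace l := (W :&: \bigcap_(i in s) f i)%VS.

Definition codimIn l (W U : subspace l) : nat := (\dim W - \dim U)%N.

Definition deg l m (W : subspace l) (f : 'I_m -> subspace l) (s : {set 'I_m})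
  : int := (2 * codimIn W (vee W f s))%:Z - (#|s|)%:Z.

(** position (1-based) of x in sigma listed increasingly *)
Definition pos m (x : 'I_m) (s : {set 'I_m}) : nat := #|[set y in s | (y <= x)%N]|.

Definition dD l m (W : subspace l) (f : 'I_m -> subspace l) (v : Dcx m) : Dcx m :=
  [ffun t => \sum_(s : {set 'I_m})
     v s * \sum_(x in s | (t == s :\ x) && (vee W f (s :\ x) == vee W f s))
             (-1) ^+ pos x s].

Definition homog l m (W : subspace l) (f : 'I_m -> subspace l) (k : int) (v : Dcx m)
  : Prop := forall s : {set 'I_m}, v s != 0 -> deg W f s = k.

(** v lies in the subcomplex D(A') (spanned by subsets not containing x_0) *)
Definition inDA' n (v : Dcx n.+1) : Prop := forall s : {set 'I_n.+1}, ord0 \in s -> v s = 0.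

Definition hasE l n (A : 'I_n.+1 -> subspace l) (s : {set 'I_n.+1}) : bool :=
  [exists i in s, exists j in s,
     [&& i != ord0, j != ord0, i != j & (A ord0 :&: A i == A ord0 :&: A j)%VS]].

(** The map phi : D(A) -> D(~A''), where the member x_0 /\ y of ~A'' is
    indexed by the class number c y of y. *)
Definition phi l n r (A : 'I_n.+1 -> subspace l) (c : 'I_n.+1 -> 'I_r)
  (v : Dcx n.+1) : Dcx r :=
  [ffun t => \sum_(s : {set 'I_n.+1})
     v s * (if (ord0 \in s) && ~~ hasE A s
            then (-1) ^+ (#|s| - 1) * (t == c @: (s :\ ord0))%:R
            else 0)].

(* Main.v *)
Require Import Defs.
From mathcomp Require Import all_boot all_algebra.
From mathcomp Require Import Rstruct complex.
From mathcomp Require Import zify ring.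
Set Implicit Arguments.
Unset Strict Implicit.
Unset Printing Implicit Defensive.
Import GRing.Theory.
Local Open Scope ring_scope.


Notation Vec m := {ffun {set 'I_m} -> rat}.

Section Lin.
Variables m p : nat.

Definition bas (s : {set 'I_m}) : Vec m := [ffun t => (t == s)%:R].
Definition lin (F : {set 'I_m} -> Vec p) (v : Vec m) : Vec p :=
  [ffun t => \sum_s v s * F s t].

Lemma linD F u v : lin F (u + v) = lin F u + lin F v.
Proof.
by apply/ffunP=> t; rewrite !ffunE -big_split /=; apply: eq_bigr => s _; rewrite ffunE mulrDl.
Qed.
Lemma lin0 F : lin F 0 = 0.
Proof. by apply/ffunP=> t; rewrite !ffunE big1 // => s _; rewrite ffunE mul0r. Qed.
Lemma linN F v : lin F (- v) = - lin F v.
Proof.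
by apply/ffunP=> t; rewrite !ffunE -sumrN; apply: eq_bigr => s _; rewrite ffunE mulNr.
Qed.
Lemma linB F u v : lin F (u - v) = lin F u - lin F v.
Proof. by rewrite linD linN. Qed.
Lemma lin_bas F s : lin F (bas s) = F s.
Proof.
apply/ffunP=> t; rewrite ffunE (bigD1 s) //= big1 ?addr0.
  by rewrite ffunE eqxx mul1r.
by move=> s' /negPf ne; rewrite ffunE ne mul0r.
Qed.
Lemma lin_ext F G (v : Vec m) : (forall s, v s != 0 -> F s = G s) -> lin F v = lin G v.
Proof.
move=> H; apply/ffunP=> t; rewrite !ffunE; apply: eq_bigr => s _.
by have [->|/H ->] := eqVneq (v s) 0; rewrite ?mul0r.
Qed.
Lemma lin_supp F (v : Vec m) t : lin F v t != 0 -> exists s, v s != 0 /\ F s t != 0.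
Proof.
move=> H; case: (boolP [exists s, v s * F s t != 0]) => [/existsP [s Hs]|Hn].
  by exists s; split; apply: contraNneq Hs => ->; rewrite ?mul0r ?mulr0.
move: H; rewrite ffunE big1 ?eqxx // => s _; apply/eqP.
by move: Hn; rewrite negb_exists => /forallP /(_ s); rewrite negbK.
Qed.

Definition homogD (dg : {set 'I_m} -> int) (k : int) (v : Vec m) :=
  forall s, v s != 0 -> dg s = k.

End Lin.

Lemma lin_comp m p q (G : {set 'I_p} -> Vec q) (F : {set 'I_m} -> Vec p) v :
  lin G (lin F v) = lin (fun s => lin G (F s)) v.
Proof.
apply/ffunP=> t; rewrite !ffunE.
under eq_bigr => u _ do rewrite ffunE big_distrl /=.
rewrite exchange_big /=; apply: eq_bigr => s _; rewrite ffunE big_distrr /=.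
by apply: eq_bigr => u _; rewrite mulrA.
Qed.
Lemma homog_lin m p (dg1 : {set 'I_m} -> int) (dg2 : {set 'I_p} -> int) (d k : int) (F : {set 'I_m} -> Vec p) (v : Vec m) :
  (forall s t, F s t != 0 -> dg2 t = dg1 s + d) ->
  homogD dg1 k v -> homogD dg2 (k + d) (lin F v).
Proof.
by move=> HF Hv t /lin_supp [s [/Hv <- /HF]].
Qed.
Lemma homogD0 m (dg : {set 'I_m} -> int) k : homogD dg k 0.
Proof. by move=> s; rewrite ffunE eqxx. Qed.
Lemma homogDD m (dg : {set 'I_m} -> int) k u v :
  homogD dg k u -> homogD dg k v -> homogD dg k (u + v).
Proof.
move=> Hu Hv s; rewrite ffunE; have [Hu0|/Hu //] := eqVneq (u s) 0.
by rewrite Hu0 add0r => /Hv.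
Qed.
Lemma homogDN m (dg : {set 'I_m} -> int) k v :
  homogD dg k v -> homogD dg k (- v).
Proof. by move=> Hv s; rewrite ffunE oppr_eq0 => /Hv. Qed.


Lemma subv_vee l m (U W : subspace l) (f : 'I_m -> subspace l) s :
  (U <= vee W f s)%VS = (U <= W)%VS && [forall i in s, (U <= f i)%VS].
Proof.
rewrite /vee subv_cap; congr (_ && _).
by apply/subv_bigcapP/forall_inP => H i Hi; apply: H.
Qed.

Lemma vee_eq l (X Y : subspace l) : (forall U, (U <= X)%VS = (U <= Y)%VS) -> X = Y.
Proof.
move=> H; apply/subv_anti; rewrite -H subvv /= H subvv //.
Qed.

Lemma pos_U1 m (x a : 'I_m) (s : {set 'I_m}) : a \notin s -> pos x (a |: s) = (pos x s + (a <= x))%N.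
Proof.
move=> as_; rewrite /pos; case: (leqP a x) => hax /=.
  have -> : [set y in a |: s | (y <= x)%N] = a |: [set y in s | (y <= x)%N].
    by apply/setP=> y; rewrite !inE; case: (eqVneq y a) => [->|] //=; rewrite hax.
  have hn : a \notin [set y in s | (y <= x)%N] by rewrite inE negb_and as_.
  by rewrite cardsU1 hn /= addnC addn1.
have -> : [set y in a |: s | (y <= x)%N] = [set y in s | (y <= x)%N].
  apply/setP=> y; rewrite !inE; case: (eqVneq y a) => [->|] //=.
  by rewrite leqNgt hax ?andbF.
by rewrite addn0.
Qed.

Lemma pos_D1 m (x a : 'I_m) (s : {set 'I_m}) : a \in s -> pos x s = (pos x (s :\ a) + (a <= x))%N.
Proof. by move=> as_; rewrite -{1}(setD1K as_) pos_U1 // setD11. Qed.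

Lemma pos_adj m (a b : 'I_m) (s : {set 'I_m}) : a \in s -> b \in s -> (a < b)%N ->
  (forall z, z \in s -> (a < z)%N -> (z < b)%N -> False) -> pos b s = (pos a s).+1.
Proof.
move=> as_ bs ab H; rewrite /pos.
have -> : [set y in s | (y <= b)%N] = b |: [set y in s | (y <= a)%N].
  apply/setP=> y; rewrite !inE; case: (eqVneq y b) => [->|ne] /=; first by rewrite bs leqnn.
  case ys: (y \in s) => //=; case: (leqP y a) => ya; first by rewrite (leq_trans ya (ltnW ab)).
  case: (ltngtP y b) => // yb; first by case: (H y ys ya yb).
  by move: ne; rewrite (val_inj yb) eqxx.
by rewrite cardsU1 inE leqNgt ab andbF /= add1n.
Qed.

Section LinSF.
Variables m p : nat.
Lemma lin_sf (G : {set 'I_m} -> Vec p) (I : finType) (P : pred I) (a : I -> rat)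
  (f : I -> {set 'I_m}) t :
  lin G [ffun u => \sum_(x | P x) a x * (u == f x)%:R] t = \sum_(x | P x) a x * G (f x) t.
Proof.
rewrite ffunE; under eq_bigr do rewrite ffunE big_distrl.
rewrite exchange_big /=; apply: eq_bigr => x _.
rewrite (bigD1 (f x)) //= eqxx mulr1 big1 ?addr0 // => u /negPf ->.
by rewrite mulr0 mul0r.
Qed.
Lemma lin_one (G : {set 'I_m} -> Vec p) (a : rat) w t :
  lin G [ffun u => a * (u == w)%:R] t = a * G w t.
Proof.
rewrite ffunE (bigD1 w) //= ffunE eqxx mulr1 big1 ?addr0 // => u /negPf ne.
by rewrite ffunE ne mulr0 mul0r.
Qed.
End LinSF.


Section Main.
Variables (l n r : nat) (A : 'I_n.+1 -> subspace l) (c : 'I_n.+1 -> 'I_r).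
Hypothesis hc : forall i j : 'I_n.+1, i != ord0 -> j != ord0 ->
          (c i == c j) = (A ord0 :&: A i == A ord0 :&: A j)%VS.
Hypothesis hc_surj : forall k : 'I_r, exists2 i : 'I_n.+1, i != ord0 & c i = k.
Hypothesis hc_order : forall i j : 'I_n.+1, i != ord0 -> j != ord0 ->
          (c i < c j)%N -> (i < j)%N.
Variable g : 'I_r -> subspace l.
Hypothesis hg : forall i : 'I_n.+1, i != ord0 -> g (c i) = (A ord0 :&: A i)%VS.

Local Notation o := (@ord0 n).
Local Notation S := {set 'I_n.+1}.
Definition cl (s : S) : {set 'I_r} := c @: (s :\ o).
Definition veeA (s : S) := vee fullv A s.
Definition veeG (T : {set 'I_r}) := vee (A o) g T.
Definition condA (s : S) x := veeA (s :\ x) == veeA s.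

Lemma veeAG (s : S) : o \in s -> veeA s = veeG (cl s).
Proof.
move=> s0; apply: vee_eq => U; rewrite /veeA /veeG !subv_vee subvf /=.
apply/forall_inP/andP => [H|[HU /forall_inP H]].
  have HU := H o s0; split => //; apply/forall_inP => k; rewrite /cl; case/imsetP => i.
  rewrite !inE => /andP [i0 is_] ->.
  by rewrite hg // subv_cap HU H.
move=> i is_; case: (eqVneq i o) => [->//|i0].
have : c i \in cl s by apply: imset_f; rewrite !inE i0.
by move/H; rewrite hg // subv_cap => /andP [].
Qed.

Lemma cl_U1 a (s : S) : a != o -> cl (a |: s) = c a |: cl s.
Proof.
move=> a0; rewrite /cl.
have -> : (a |: s) :\ o = a |: (s :\ o).
  by apply/setP=> y; rewrite !inE; case: (eqVneq y a) => [->|]; rewrite ?a0.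
by rewrite imsetU1.
Qed.

Lemma cl_D1 x (s : S) : x \in s -> x != o -> cl s = c x |: cl (s :\ x).
Proof. by move=> xs x0; rewrite -{1}(setD1K xs) cl_U1. Qed.

Lemma condAG (s : S) x : o \in s -> x != o -> condA s x = (veeG (cl (s :\ x)) == veeG (cl s)).
Proof. by move=> s0 x0; rewrite /condA !veeAG // !inE eq_sym x0. Qed.

Lemma vee_anti l' m (W : subspace l') (f : 'I_m -> subspace l') (s s' : {set 'I_m}) :
  s \subset s' -> (vee W f s' <= vee W f s)%VS.
Proof.
move=> ss; rewrite subv_vee; apply/andP; split.
  by move: (subvv (vee W f s')); rewrite subv_vee => /andP [].
apply/forall_inP => i is_; move: (subvv (vee W f s')); rewrite subv_vee => /andP [_ /forall_inP].
by apply; apply: (subsetP ss).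
Qed.

Definition Yk (k : nat) (s : S) : S := [set x in s | (x != o) && (val (c x) == k)].
Definition mk (k : nat) : 'I_n.+1 := odflt o [pick i | (i != o) && (val (c i) == k)].

Lemma mk_spec k i : i != o -> val (c i) = k -> mk k != o /\ val (c (mk k)) = k.
Proof.
move=> i0 ci; rewrite /mk; case: pickP => [j /andP [j0 /eqP cj] //|/(_ i)].
by rewrite i0 ci eqxx.
Qed.

Lemma Yk_mk k (s : S) : Yk k s != set0 -> mk k != o /\ val (c (mk k)) = k.
Proof.
by case/set0Pn => i; rewrite inE => /and3P [_ i0 /eqP ci]; apply: (mk_spec i0 ci).
Qed.

Lemma mkI (k : 'I_r) : mk k != o /\ c (mk k) = k.
Proof.
have [i i0 ci] := hc_surj k; have [m0 cm] := mk_spec i0 (congr1 val ci).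
by split => //; apply: val_inj.
Qed.

Lemma neq0_lt (i z : 'I_n.+1) : (i < z)%N -> z != o.
Proof. by move=> iz; apply/eqP => z0; move: iz; rewrite z0. Qed.

Lemma contig (i j z : 'I_n.+1) : i != o -> j != o -> c i = c j -> (i < z)%N -> (z < j)%N -> c z = c i.
Proof.
move=> i0 j0 cij iz zj; have z0 := neq0_lt iz.
case: (ltngtP (c z) (c i)) => h; last exact: val_inj.
  by have := hc_order z0 i0 h; rewrite ltnNge (ltnW iz).
by rewrite cij in h; have := hc_order j0 z0 h; rewrite ltnNge (ltnW zj).
Qed.


Definition dQB (s : S) : Vec n.+1 := [ffun t => if o \in s then
   \sum_(x in s | (x != o) && condA s x) (-1) ^+ pos x s * (t == s :\ x)%:R else 0].
Definition dQ := lin dQB.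

Lemma dQB0 (s : S) : o \notin s -> dQB s = 0.
Proof. by move=> s0; apply/ffunP=> t; rewrite !ffunE (negPf s0). Qed.

Lemma dQBE (s : S) : o \in s -> dQB s =
  [ffun t => \sum_(x in s | (x != o) && condA s x) (-1) ^+ pos x s * (t == s :\ x)%:R].
Proof. by move=> s0; apply/ffunP=> t; rewrite !ffunE s0. Qed.

Lemma lin_dQB p (G : S -> Vec p) (s : S) t : o \in s -> lin G (dQB s) t =
  \sum_(x in s | (x != o) && condA s x) (-1) ^+ pos x s * G (s :\ x) t.
Proof.
move=> s0; rewrite dQBE //.
exact: (lin_sf G (fun x => (x \in s) && ((x != o) && condA s x)) (fun x => (-1) ^+ pos x s)
   (fun x => s :\ x)).
Qed.

Lemma sum_D1 (T : finType) (s : {set T}) x (F : T -> rat) :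
  \sum_(y in s :\ x) F y = \sum_(y in s) (if y != x then F y else 0).
Proof.
rewrite [RHS]big_mkcond [LHS]big_mkcond; apply: eq_bigr => y _.
by rewrite !inE; case: (y \in s); case: (y != x).
Qed.

Lemma antisym_sum (T : finType) (s : {set T}) (a : T -> T -> rat) :
  (forall x y, x \in s -> y \in s -> a y x = - a x y) ->
  \sum_(x in s) \sum_(y in s) a x y = 0.
Proof.
move=> H; set S0 := (X in X = 0).
have HS : S0 = - S0.
  rewrite {1}/S0 exchange_big /= -sumrN; apply: eq_bigr => y ys.
  rewrite -sumrN; apply: eq_bigr => x xs; exact: H.
have : (2%:R : rat) * S0 = 0 by rewrite mulr_natl mulr2n {1}HS addNr.
by move/eqP; rewrite mulf_eq0 => /orP [//|/eqP].
Qed.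

Lemma condA_sym (s : S) x y :
  condA s x && condA (s :\ x) y = (veeA (s :\ x :\ y) == veeA s).
Proof.
rewrite /condA; apply/andP/eqP => [[/eqP -> /eqP ->] //|H].
have h1 : (veeA s <= veeA (s :\ x))%VS by apply: vee_anti; apply: subD1set.
have h2 : (veeA (s :\ x) <= veeA (s :\ x :\ y))%VS by apply: vee_anti; apply: subD1set.
have e : veeA (s :\ x) = veeA s by apply/subv_anti; rewrite h1 -H h2.
by rewrite e H; split.
Qed.

Lemma setD1C (T : finType) (s : {set T}) x y : s :\ x :\ y = s :\ y :\ x.
Proof. by apply/setP=> z; rewrite !inE andbCA. Qed.

Lemma dQdQ_bas (s : S) : lin dQB (dQB s) = 0.
Proof.
apply/ffunP => t; rewrite [in RHS]ffunE.
case: (boolP (o \in s)) => s0; last by rewrite dQB0 // lin0 ffunE.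
rewrite lin_dQB //.
pose a x y : rat := if (x != o) && (y != o) && (y != x) && condA s x && condA (s :\ x) y
  then (-1) ^+ pos x s * (-1) ^+ pos y (s :\ x) * (t == s :\ x :\ y)%:R else 0.
transitivity (\sum_(x in s) \sum_(y in s) a x y); last first.
  apply: antisym_sum => x y xs ys; rewrite /a.
  case: (eqVneq y x) => [->|yx]; first by rewrite !andbF oppr0.
  rewrite /= -!andbA !condA_sym [s :\ y :\ x]setD1C.
  case: (x != o); case: (y != o); case: (veeA (s :\ x :\ y) == veeA s); rewrite /= ?oppr0 //.
  rewrite (pos_D1 x (ys : y \in s)) (pos_D1 y (xs : x \in s)) !exprD.
  case: (ltngtP x y) => h; last by move: yx; rewrite (val_inj h) eqxx.
    by rewrite /= expr1 expr0; ring.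
  by rewrite /= expr1 expr0; ring.
rewrite big_mkcondr; apply: eq_bigr => x xs.
case: (eqVneq x o) => [->|x0] /=; first by rewrite /a eqxx /= big1.
case cx: (condA s x) => /=; last by symmetry; apply: big1 => y _; rewrite /a cx ?andbF.
have s0' : o \in s :\ x by rewrite !inE eq_sym x0.
rewrite dQBE // ffunE big_distrr /= big_mkcondr sum_D1; apply: eq_bigr => y ys.
rewrite /a x0 cx /=; case: (y != x) => //=; by case: (y != o) => //=; case: (condA (s :\ x) y) => //=; rewrite mulrA.
Qed.

Lemma dQdQ v : dQ (dQ v) = 0.
Proof.
by rewrite /dQ lin_comp; apply/ffunP=> t; rewrite !ffunE big1 // => s _; rewrite dQdQ_bas ffunE mulr0.
Qed.

Lemma dD_dQ (v : Vec n.+1) (t : S) : o \in t -> dD fullv A v t = dQ v t.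
Proof.
move=> t0; rewrite /dD /dQ /lin !ffunE; apply: eq_bigr => s _; congr (_ * _); rewrite ffunE.
case: (boolP (o \in s)) => s0.
  rewrite [LHS]big_mkcond [RHS]big_mkcond; apply: eq_bigr => x _.
  case xs: (x \in s) => //=.
  case: (eqVneq x o) => [->|x0] /=.
    by rewrite (_ : (t == s :\ o) = false) //; apply: contraTF t0 => /eqP ->; rewrite setD11.
  by rewrite /condA /veeA; case: (t == s :\ x); case: (_ == _); rewrite ?mulr1 ?mulr0.
rewrite big1 // => x /andP [xs /andP [/eqP te _]].
by move: t0; rewrite te !inE (negPf s0) andbF.
Qed.

Lemma dQ_off (v : Vec n.+1) (t : S) : o \notin t -> dQ v t = 0.
Proof.
move=> t0; rewrite /dQ ffunE big1 // => s _; rewrite ffunE.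
case: ifP => s0; rewrite ?mulr0 // big1 ?mulr0 // => x /andP [xs /andP [x0 _]].
by rewrite (_ : (t == s :\ x) = false) ?mulr0 //; apply: contraNF t0 => /eqP ->; rewrite !inE eq_sym x0.
Qed.


Lemma addfE p (u v : Vec p) t : (u + v) t = u t + v t.
Proof. by rewrite ffunE. Qed.
Lemma subfE p (u v : Vec p) t : (u - v) t = u t - v t.
Proof. by rewrite !ffunE. Qed.
Lemma zerofE p (t : {set 'I_p}) : (0 : Vec p) t = 0.
Proof. by rewrite ffunE. Qed.
Lemma basE p (s t : {set 'I_p}) : bas s t = (t == s)%:R.
Proof. by rewrite ffunE. Qed.

Lemma sgn_sq (a : nat) : (-1) ^+ a * (-1) ^+ a = 1 :> rat.
Proof. by rewrite -exprD addnn -mul2n exprM expr2 mulrNN mulr1 expr1n. Qed.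

Lemma Yk_D1 k (s : S) x : Yk k (s :\ x) = Yk k s :\ x.
Proof. by apply/setP=> y; rewrite !inE; case: (y != x). Qed.

Lemma setU1D1 (T : finType) (s : {set T}) a x : a != x -> (a |: s) :\ x = a |: (s :\ x).
Proof.
move=> ax; apply/setP=> z; rewrite !inE; case: (eqVneq z x) => [->|] //=.
by rewrite eq_sym (negPf ax).
Qed.

Lemma cl_mk k (s : S) : Yk k s != set0 -> cl (mk k |: s) = cl s.
Proof.
move=> Y0; have [m0 cm] := Yk_mk Y0; case/set0Pn: Y0 => y.
rewrite inE => /and3P [ys y0 /eqP cy].
rewrite cl_U1 //; apply/setP => z; rewrite in_setU in_set1.
case: (eqVneq z (c (mk k))) => [->|] //=; rewrite /cl.
apply/esym/imsetP; exists y; first by rewrite !inE y0.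
by apply: val_inj; rewrite cm cy.
Qed.

Definition hB (k : nat) (s : S) : Vec n.+1 := [ffun t =>
  if [&& o \in s, Yk k s != set0 & mk k \notin s]
  then (-1) ^+ pos (mk k) (mk k |: s) * (t == mk k |: s)%:R else 0].

Definition PB (k : nat) (s : S) : Vec n.+1 :=
  if (o \in s) && (Yk k s != set0) then
    (if #|Yk k s| == 1%N then bas (mk k |: (s :\: Yk k s)) else 0)
  else bas s.

Lemma hB0 k (s : S) : ~~ [&& o \in s, Yk k s != set0 & mk k \notin s] -> hB k s = 0.
Proof. by move/negPf => h; apply/ffunP=> t; rewrite !ffunE h. Qed.

Lemma hBE k (s : S) : [&& o \in s, Yk k s != set0 & mk k \notin s] ->
  hB k s = [ffun t => (-1) ^+ pos (mk k) (mk k |: s) * (t == mk k |: s)%:R].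
Proof. by move=> h; apply/ffunP=> t; rewrite !ffunE h. Qed.

Lemma sign_cancel (m x : 'I_n.+1) (s : S) : m \notin s -> x \in s ->
  (-1) ^+ pos m (m |: s) * (-1) ^+ pos x (m |: s) =
  - ((-1) ^+ pos x s * (-1) ^+ pos m (m |: (s :\ x))) :> rat.
Proof.
move=> ms xs; have mx : m != x by apply: contraNneq ms => ->.
have xms : x \in m |: s by rewrite !inE xs orbT.
rewrite (pos_U1 x ms) (pos_D1 m xms) setU1D1 // !exprD.
case: (ltngtP x m) => h.
- by rewrite /= expr1 expr0; ring.
- by rewrite /= expr1 expr0; ring.
- by move: mx; rewrite (val_inj h) eqxx.
Qed.

Lemma sign_adj k (s : S) x : o \in s -> Yk k s = [set x] -> mk k \notin s ->
  (-1) ^+ pos (mk k) (mk k |: s) * (-1) ^+ pos x (mk k |: s) = -1 :> rat.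
Proof.
move=> s0 Yx ms.
have Y0 : Yk k s != set0 by rewrite Yx; apply/set0Pn; exists x; rewrite inE.
have [m0 cm] := Yk_mk Y0.
have : x \in Yk k s by rewrite Yx inE.
rewrite inE => /and3P [xs x0 /eqP cx].
have cxm : c x = c (mk k) by apply: val_inj; rewrite cx cm.
move: ms m0 cm cxm; set m := mk k => ms m0 cm cxm.
have mx : m != x by apply: contraNneq ms => ->.
have inY : forall z, z \in m |: s -> z != m -> z != o -> c z = c x -> z = x.
  move=> z; rewrite !inE => /orP [/eqP -> /eqP //|zs] zm z0 czx.
  have : z \in Yk k s by rewrite inE zs z0 czx cx /=.
  by rewrite Yx inE => /eqP.
have mms : m \in m |: s by rewrite !inE eqxx.
have xms : x \in m |: s by rewrite !inE xs orbT.
case: (ltngtP x m) => h.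
- rewrite (@pos_adj _ x m) //; last first.
    move=> z zs h1 h2; have cz := contig x0 m0 cxm h1 h2.
    have zm : z != m by apply/eqP => e; move: h2; rewrite e ltnn.
    by have := h1; rewrite (inY z zs zm (neq0_lt h1) cz) ltnn.
  by rewrite exprS -mulrA sgn_sq mulr1.
- rewrite (@pos_adj _ m x) //; last first.
    move=> z zs h1 h2; have cz := contig m0 x0 (esym cxm) h1 h2.
    have zm : z != m by apply/eqP => e; move: h1; rewrite e ltnn.
    by have := h2; rewrite (inY z zs zm (neq0_lt h1) (etrans cz (esym cxm))) ltnn.
  by rewrite exprS mulrCA sgn_sq mulr1.
- by move: mx; rewrite (val_inj h) eqxx.
Qed.


Lemma homotopy k (s : S) : bas s - PB k s = lin dQB (hB k s) + lin (hB k) (dQB s).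
Proof.
apply/ffunP => t; rewrite subfE addfE.
case: (boolP (o \in s)) => s0; last first.
  rewrite /PB (negPf s0) /= hB0 ?(negPf s0) // dQB0 // !lin0 !zerofE.
  by rewrite subrr addr0.
rewrite (lin_dQB (hB k) t s0).
case: (eqVneq (Yk k s) set0) => Y0.
  rewrite /PB s0 Y0 eqxx /= hB0; last by rewrite Y0 eqxx andbF.
  rewrite lin0 zerofE subrr add0r big1 // => x _.
  by rewrite hB0 ?zerofE ?mulr0 // Yk_D1 Y0 set0D eqxx /= andbF.
have [m0 cm] := Yk_mk Y0.
have mY : forall x, x \in s -> x != o -> val (c x) = k -> x \in Yk k s.
  by move=> x xs x0 cx; rewrite inE xs x0 cx eqxx.
case: (boolP (mk k \in s)) => ms.
  have mYs : mk k \in Yk k s by apply: mY.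
  rewrite hB0; last by rewrite ms !andbF.
  rewrite lin0 zerofE add0r /PB s0 Y0 /=.
  have oth : forall x, x != mk k -> hB k (s :\ x) t = 0.
    move=> x xm; have hm : mk k \in s :\ x by rewrite in_setD1 (eq_sym (mk k)) xm ms.
    by rewrite hB0 ?zerofE // hm !andbF.
  case: (eqVneq #|Yk k s| 1%N) => Y1.
    have Ym : Yk k s = [set mk k].
      by move/eqP: Y1 => /cards1P [y Yy]; move: mYs; rewrite Yy inE => /eqP ->.
    rewrite Ym setD1K // subrr big1 // => x _.
    case: (eqVneq x (mk k)) => [->|xm]; last by rewrite oth // mulr0.
    by rewrite hB0 ?zerofE ?mulr0 // Yk_D1 Ym setDv eqxx /= andbF.
  have YD : Yk k (s :\ mk k) != set0.
    rewrite Yk_D1; apply: contra Y1 => /eqP E.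
    by rewrite -(setD1K mYs) E setU0 cards1.
  rewrite (bigD1 (mk k)) /=; last first.
    by rewrite ms m0 /= (condAG s0 m0) -[in cl s](setD1K ms) cl_mk // eqxx.
  rewrite big1 ?addr0; last by move=> x /andP [_ xm]; rewrite oth // mulr0.
  rewrite hBE; last by rewrite !inE eq_sym m0 s0 YD eqxx.
  by rewrite !ffunE setD1K // mulrA sgn_sq mul1r subr0.
have hs : [&& o \in s, Yk k s != set0 & mk k \notin s] by rewrite s0 Y0 ms.
have s0' : o \in mk k |: s by rewrite !inE s0 orbT.
rewrite (hBE hs) lin_one (dQBE s0') [X in _ = _ * X + _]ffunE big_mkcondr (big_setU1 _ ms) /=.
rewrite m0 /= setU1K // (condAG s0' m0) cl_mk // (setU1K ms) eqxx.
rewrite mulrDr mulrA sgn_sq mul1r big_mkcondr mulr_sumr -addrA -big_split /=.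
rewrite basE /PB s0 Y0 /=.
have YDne : forall x, x \notin Yk k s -> Yk k (s :\ x) != set0.
  move=> x xY; rewrite Yk_D1; case/set0Pn: Y0 => y yY; apply/set0Pn; exists y.
  by rewrite in_setD1 yY andbT; apply: contraNneq xY => <-.
rewrite (eq_bigr (fun x => if Yk k (s :\ x) == set0 then - (t == mk k |: (s :\ x))%:R else 0)); last first.
  move=> x xs; case: (eqVneq x o) => [->|x0].
    rewrite /= mulr0 addr0 ifN //; apply: YDne; by rewrite inE eqxx andbF.
  have mx : mk k != x by apply: contraNneq ms => ->.
  rewrite /= setU1D1 //.
  have xs' : o \in s :\ x by rewrite in_setD1 eq_sym x0 s0.
  have mxs : mk k \notin s :\ x by rewrite in_setD1 (negPf ms) andbF.
  case: (eqVneq (Yk k (s :\ x)) set0) => Yx.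
    have xY : x \in Yk k s by apply: contraT => /YDne; rewrite Yx eqxx.
    have Yxe : Yk k s = [set x] by rewrite -(setD1K xY) -Yk_D1 Yx setU0.
    rewrite hB0; last by rewrite Yx eqxx andbF.
    rewrite zerofE mulr0 if_same addr0.
    have cxm : c x = c (mk k).
      by apply: val_inj; move: xY; rewrite inE => /and3P [_ _ /eqP ->]; rewrite cm.
    rewrite (condAG s0' x0) setU1D1 // cl_U1 // cl_U1 // (cl_D1 xs x0) cxm setUA setUid eqxx /=.
    by rewrite mulrA (sign_adj s0 Yxe ms) mulN1r.
  rewrite (hBE (_ : [&& _, _ & _])); last by rewrite xs' Yx mxs.
  rewrite ffunE (condAG s0' x0) (condAG s0 x0) setU1D1 // cl_mk // cl_mk //.
  case: (_ == _); rewrite ?mulr0 ?addr0 //.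
  by rewrite !mulrA (sign_cancel ms xs) mulNr addNr.
case: (eqVneq #|Yk k s| 1%N) => Y1.
  move/eqP: Y1 => /cards1P [y Yy].
  have yY : y \in Yk k s by rewrite Yy inE.
  have ys : y \in s by move: yY; rewrite inE => /andP [].
  rewrite basE (bigD1 y) //= Yk_D1 Yy setDv eqxx big1 ?addr0 //.
  move=> i /andP [is_ iy]; rewrite Yk_D1 Yy ifN //; apply/set0Pn; exists y.
  by rewrite in_setD1 in_set1 eqxx andbT eq_sym.
rewrite zerofE subr0 big1 ?addr0 // => i _.
rewrite ifN //; case: (boolP (i \in Yk k s)) => iY; last exact: YDne.
rewrite Yk_D1; apply: contra Y1 => /eqP E.
by rewrite -(setD1K iY) E setU0 cards1.
Qed.

Lemma lin_id p (v : Vec p) : lin (@bas p) v = v.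
Proof.
apply/ffunP=> t; rewrite ffunE (bigD1 t) //= basE eqxx mulr1 big1 ?addr0 // => u /negPf ne.
by rewrite basE eq_sym ne mulr0.
Qed.
Lemma linFD p q (F G : {set 'I_p} -> Vec q) v :
  lin (fun s => F s + G s) v = lin F v + lin G v.
Proof.
by apply/ffunP=> t; rewrite !ffunE -big_split; apply: eq_bigr => s _; rewrite ffunE mulrDr.
Qed.
Lemma linFB p q (F G : {set 'I_p} -> Vec q) v :
  lin (fun s => F s - G s) v = lin F v - lin G v.
Proof.
apply/ffunP=> t; rewrite !ffunE -sumrB; apply: eq_bigr => s _.
by rewrite !ffunE mulrBr.
Qed.

Definition Pk k := lin (PB k).
Definition hk k := lin (hB k).

Lemma homotopy_v k v : v - Pk k v = dQ (hk k v) + hk k (dQ v).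
Proof.
rewrite /dQ /hk /Pk !lin_comp -linFD -{1}(lin_id v) -linFB.
by apply: lin_ext => s _; rewrite homotopy.
Qed.

Lemma PkE k v : Pk k v = v - dQ (hk k v) - hk k (dQ v).
Proof. by rewrite -addrA -opprD -homotopy_v opprB addrC subrK. Qed.

Lemma dQ_lin : (forall u v, dQ (u + v) = dQ u + dQ v) /\ (forall v, dQ (- v) = - dQ v).
Proof. by split; [apply: linD | apply: linN]. Qed.

Lemma Pk_chain k v : dQ (Pk k v) = Pk k (dQ v).
Proof.
rewrite !PkE dQdQ /hk lin0 subr0 /dQ !linB -/dQ dQdQ subr0.
by [].
Qed.

Definition phiB (s : S) : Vec r := [ffun T =>
  if (o \in s) && ~~ hasE A s then (-1) ^+ (#|s| - 1) * (T == cl s)%:R else 0].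

Lemma phiE (v : Vec n.+1) : phi A c v = lin phiB v.
Proof. by apply/ffunP=> T; rewrite !ffunE; apply: eq_bigr => s _; rewrite ffunE. Qed.

Lemma hasE_card (s : S) : hasE A s = (#|cl s| != #|s :\ o|).
Proof.
apply/idP/idP.
  case/exists_inP => i is_ /exists_inP [j js /and4P [i0 j0 ij]].
  rewrite -hc // => /eqP cij; apply/negP => /imset_injP inj.
  by move: ij; rewrite (inj i j) ?eqxx // !inE ?i0 ?j0.
apply: contraR => nE; apply/imset_injP => i j; rewrite !inE => /andP [i0 is_] /andP [j0 js] cij.
apply/eqP; apply: contraR nE => ij; apply/exists_inP; exists i => //; apply/exists_inP; exists j => //.
by rewrite i0 j0 ij /= -hc // cij.
Qed.

Lemma card_cl_noE (s : S) : o \in s -> ~~ hasE A s -> #|cl s| = (#|s| - 1)%N.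
Proof.
by move=> s0; rewrite hasE_card negbK => /eqP ->; rewrite (cardsD1 o s) s0 add1n subn1.
Qed.

Lemma phi_Pk_bas k (s : S) : lin phiB (PB k s) = phiB s.
Proof.
rewrite /PB; case: ifP => [/andP [s0 Y0]|_]; last exact: lin_bas.
have [m0 cm] := Yk_mk Y0.
case: (eqVneq #|Yk k s| 1%N) => Y1; last first.
  case/set0Pn: (Y0) => y yY.
  have : Yk k s :\ y != set0.
    by apply: contra Y1 => /eqP E; rewrite -(setD1K yY) E setU0 cards1.
  case/set0Pn => z; rewrite in_setD1 => /andP [zy zY].
  move: yY zY; rewrite !inE => /and3P [ys y0 /eqP cy] /and3P [zs z0 /eqP cz].
  have hE : hasE A s.
    apply/exists_inP; exists y => //; apply/exists_inP; exists z => //.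
    by rewrite y0 z0 eq_sym zy /= -hc // ; apply/eqP/val_inj; rewrite cy cz.
  by rewrite lin0; apply/ffunP=> T; rewrite !ffunE hE andbF.
move/eqP: Y1 => /cards1P [y Yy]; rewrite Yy lin_bas.
have : y \in Yk k s by rewrite Yy inE.
rewrite inE => /and3P [ys y0 /eqP cy].
case: (eqVneq y (mk k)) => [<-|ym]; first by rewrite setD1K.
have ms : mk k \notin s.
  apply: contra ym => ms; have : mk k \in Yk k s by rewrite inE ms m0 cm eqxx.
  by rewrite Yy inE eq_sym.
have cym : c (mk k) = c y by apply: val_inj; rewrite cm cy.
have s0' : o \in s :\ y by rewrite in_setD1 eq_sym y0 s0.
have e1 : cl (mk k |: s :\ y) = cl s by rewrite cl_U1 // cym -cl_D1.
have e2 : #|mk k |: s :\ y| = #|s|.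
  by rewrite cardsU1 in_setD1 (negPf ms) andbF /= (cardsD1 y s) ys.
have s0'' : o \in mk k |: s :\ y by rewrite in_setU1 s0' orbT.
apply/ffunP => T; rewrite /phiB !ffunE s0'' s0 /= !hasE_card e1 e2.
have -> : #|(mk k |: s :\ y) :\ o| = #|s :\ o|.
  move: (cardsD1 o (mk k |: s :\ y)) (cardsD1 o s); rewrite e2 s0'' s0 /=.
  by move=> h1 h2; apply: (@addnI 1); rewrite -h1 -h2.
by [].
Qed.

Definition rho (k : 'I_r) : 'I_n.+1 := mk k.
Lemma rho0 k : rho k != o. Proof. by have [] := mkI k. Qed.
Lemma c_rho k : c (rho k) = k. Proof. by have [] := mkI k. Qed.
Lemma rho_inj : injective rho. Proof. exact: (can_inj c_rho). Qed.
Lemma rho_le (j k : 'I_r) : (rho j <= rho k)%N = (j <= k)%N.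
Proof.
case: (ltngtP j k) => h.
- by apply: ltnW; apply: hc_order; rewrite ?rho0 // !c_rho.
- by apply/negbTE; rewrite -ltnNge; apply: hc_order; rewrite ?rho0 // !c_rho.
- by rewrite (val_inj h) leqnn.
Qed.

Definition tau (T : {set 'I_r}) : S := o |: rho @: T.
Lemma o_notin_rho (T : {set 'I_r}) : o \notin rho @: T.
Proof. by apply/imsetP => [[k _ e]]; move: (rho0 k); rewrite -e eqxx. Qed.
Lemma tau0 (T : {set 'I_r}) : o \in tau T. Proof. by rewrite /tau in_setU1 eqxx. Qed.
Lemma cl_tau (T : {set 'I_r}) : cl (tau T) = T.
Proof.
rewrite /cl /tau setU1K ?o_notin_rho // -imset_comp.
by rewrite (eq_imset _ c_rho) imset_id.
Qed.
Lemma card_rho (T : {set 'I_r}) : #|rho @: T| = #|T|.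
Proof. by apply: card_imset; apply: rho_inj. Qed.
Lemma card_tau (T : {set 'I_r}) : #|tau T| = #|T|.+1.
Proof. by rewrite /tau cardsU1 o_notin_rho card_rho. Qed.
Lemma noE_tau (T : {set 'I_r}) : ~~ hasE A (tau T).
Proof. by rewrite hasE_card negbK cl_tau /tau setU1K ?o_notin_rho // card_rho. Qed.
Lemma tau_D1 (T : {set 'I_r}) k : k \in T -> tau T :\ rho k = tau (T :\ k).
Proof.
move=> kT; rewrite /tau setU1D1; last by rewrite eq_sym rho0.
congr (_ |: _); apply/setP=> y; rewrite in_setD1.
apply/andP/imsetP => [[yk /imsetP [j jT ey]]|[j]].
  exists j => //; rewrite in_setD1 jT andbT; apply/eqP => e.
  by move: yk; rewrite ey e eqxx.
rewrite in_setD1 => /andP [jk jT] ->; split; last exact: imset_f.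
by apply: contra jk => /eqP /rho_inj ->.
Qed.
Lemma pos_tau (T : {set 'I_r}) k : k \in T -> pos (rho k) (tau T) = (pos k T).+1.
Proof.
move=> kT; rewrite /tau pos_U1 ?o_notin_rho //= addn1; congr _.+1.
rewrite /pos -(card_rho [set j in T | (j <= k)%N]).
have -> : [set y in rho @: T | (y <= rho k)%N] = rho @: [set j in T | (j <= k)%N]; last by [].
apply/setP=> y; rewrite inE; apply/andP/imsetP => [[/imsetP [j jT ey] le]|[j]].
  by exists j => //; rewrite inE jT -rho_le -ey.
by rewrite inE => /andP [jT le] ->; rewrite imset_f // rho_le.
Qed.

Definition psiB (T : {set 'I_r}) : Vec n.+1 := [ffun s => (-1) ^+ #|T| * (s == tau T)%:R].

Lemma phi_psi_bas (T : {set 'I_r}) : lin phiB (psiB T) = bas T.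
Proof.
apply/ffunP=> T'; rewrite lin_one /phiB !ffunE tau0 noE_tau /= card_tau cl_tau subn1 /=.
by rewrite mulrA sgn_sq mul1r.
Qed.

Definition dGB (T : {set 'I_r}) : Vec r := [ffun T' => \sum_(x in T | (T' == T :\ x) &&
  (vee (A o) g (T :\ x) == vee (A o) g T)) (-1) ^+ pos x T].

Lemma dGE (v : Vec r) : dD (A o) g v = lin dGB v.
Proof. by apply/ffunP=> T; rewrite !ffunE; apply: eq_bigr => s _; rewrite ffunE. Qed.

Lemma dGBE (T : {set 'I_r}) : dGB T = [ffun T' => \sum_(x in T | veeG (T :\ x) == veeG T)
   (-1) ^+ pos x T * (T' == T :\ x)%:R].
Proof.
apply/ffunP=> T'; rewrite !ffunE [RHS]big_mkcondr [LHS]big_mkcondr; apply: eq_bigr => x _.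
by rewrite /veeG; case: (T' == _); case: (_ == _); rewrite /= ?mulr1 ?mulr0.
Qed.

Lemma psi_chain_bas (T : {set 'I_r}) : lin dQB (psiB T) = lin psiB (dGB T).
Proof.
apply/ffunP=> t; rewrite lin_one (dQBE (tau0 T)) ffunE dGBE.
rewrite (lin_sf psiB (fun x => (x \in T) && (veeG (T :\ x) == veeG T))).
rewrite big_mkcondr /tau (big_setU1 _ (o_notin_rho T)) /= add0r.
rewrite big_imset /=; last by move=> i j _ _; apply: rho_inj.
rewrite [RHS]big_mkcondr mulr_sumr; apply: eq_bigr => k kT.
rewrite rho0 /= -/(tau T) (condAG (tau0 T) (rho0 k)) (tau_D1 kT) !cl_tau.
case: (_ == _); rewrite ?mulr0 //.
rewrite (pos_tau kT) ffunE (cardsD1 k T) kT add1n.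
by rewrite !exprS; ring.
Qed.

Definition degA (s : S) : int := deg fullv A s.
Definition degG (T : {set 'I_r}) : int := deg (A o) g T.
Definition shift : int := (2 * codimIn fullv (A o))%:Z - 1.

Lemma sum_nz (I : finType) (P : pred I) (F : I -> rat) :
  \sum_(x | P x) F x != 0 -> exists x, P x /\ F x != 0.
Proof.
move=> H; case: (boolP [exists x, P x && (F x != 0)]) => [/existsP [x /andP [Px Fx]]|Hn].
  by exists x.
move: H; rewrite big1 ?eqxx // => x Px; apply/eqP.
by move: Hn; rewrite negb_exists => /forallP /(_ x); rewrite Px /= negbK.
Qed.

Lemma deg_D1 (s : S) x : x \in s -> veeA (s :\ x) = veeA s -> degA (s :\ x) = degA s + 1.
Proof.
move=> xs e; rewrite /degA /deg -!/(veeA _) e.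
by move: (cardsD1 x s); rewrite xs /=; lia.
Qed.

Definition dB (s : S) : Vec n.+1 := [ffun t => \sum_(x in s | (t == s :\ x) &&
  (vee fullv A (s :\ x) == vee fullv A s)) (-1) ^+ pos x s].
Lemma dDE (v : Vec n.+1) : dD fullv A v = lin dB v.
Proof. by apply/ffunP=> T; rewrite !ffunE; apply: eq_bigr => s _; rewrite ffunE. Qed.

Lemma deg_dB (s t : S) : dB s t != 0 -> degA t = degA s + 1.
Proof.
rewrite ffunE => /sum_nz [x [/andP [xs /andP [/eqP -> /eqP e]] _]].
exact: deg_D1.
Qed.

Lemma dimV (T : {set 'I_r}) : (\dim (veeG T) <= \dim (A o) <= \dim (@fullv _ 'rV[CC]_l))%N.
Proof.
rewrite !dimvS ?subvf //.
by move: (subvv (veeG T)); rewrite {2}/veeG subv_vee => /andP [].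
Qed.

Lemma deg_hB k (s t : S) : hB k s t != 0 -> degA t = degA s + (-1).
Proof.
rewrite ffunE; case: ifP => [/and3P [s0 Y0 ms]|]; last by rewrite eqxx.
case: (eqVneq t (mk k |: s)) => [->|]; last by rewrite mulr0 eqxx.
move=> _; have s0' : o \in mk k |: s by rewrite in_setU1 s0 orbT.
rewrite /degA /deg -!/(veeA _) !veeAG // cl_mk //.
by rewrite cardsU1 ms /=; lia.
Qed.

Lemma deg_PB k (s t : S) : PB k s t != 0 -> degA t = degA s + 0.
Proof.
rewrite addr0 /PB; case: ifP => [/andP [s0 Y0]|_]; last by rewrite basE; case: (t =P s) => [->|].
have [m0 cm] := Yk_mk Y0.
case: (eqVneq #|Yk k s| 1%N) => Y1; last by rewrite zerofE eqxx.
rewrite basE; case: (t =P _) => [->|] // _.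
move/eqP: Y1 => /cards1P [y Yy]; rewrite Yy.
have : y \in Yk k s by rewrite Yy inE.
rewrite inE => /and3P [ys y0 /eqP cy].
case: (eqVneq y (mk k)) => [<-|ym]; first by rewrite setD1K.
have ms : mk k \notin s.
  apply: contra ym => ms; have : mk k \in Yk k s by rewrite inE ms m0 cm eqxx.
  by rewrite Yy inE eq_sym.
have cym : c (mk k) = c y by apply: val_inj; rewrite cm cy.
have s0' : o \in s :\ y by rewrite in_setD1 eq_sym y0 s0.
have s0'' : o \in mk k |: s :\ y by rewrite in_setU1 s0' orbT.
rewrite /degA /deg -!/(veeA _) !veeAG // cl_U1 // cym -cl_D1 //.
by rewrite cardsU1 in_setD1 (negPf ms) andbF /=; move: (cardsD1 y s); rewrite ys /=; lia.
Qed.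

Lemma deg_phiB (s : S) T : phiB s T != 0 -> degG T = degA s + (- shift).
Proof.
rewrite ffunE; case: ifP => [/andP [s0 nE]|]; last by rewrite eqxx.
case: (T =P cl s) => [->|]; last by rewrite mulr0 eqxx.
move=> _; rewrite /degG /degA /deg /shift -/(veeA _) -/(veeG _) veeAG // card_cl_noE //.
have := dimV (cl s); have : (0 < #|s|)%N by apply/card_gt0P; exists o.
rewrite /codimIn; lia.
Qed.

Lemma deg_psiB T (s : S) : psiB T s != 0 -> degA s = degG T + shift.
Proof.
rewrite ffunE; case: (s =P tau T) => [->|]; last by rewrite mulr0 eqxx.
move=> _; rewrite /degG /degA /deg /shift -/(veeA _) -/(veeG _) veeAG ?tau0 // cl_tau card_tau.
have := dimV T; rewrite /codimIn; lia.
Qed.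

Definition good (k : nat) (v : Vec n.+1) := forall s : S, o \in s -> v s != 0 ->
  forall j, (j < k)%N -> Yk j s \subset [set mk j].

Lemma good_Pk k (v : Vec n.+1) : good k v -> good k.+1 (Pk k v).
Proof.
move=> gv t t0 /lin_supp [s [vs Ps]] j; rewrite ltnS leq_eqVlt => /orP [/eqP ->|jk].
  move: Ps; rewrite /PB; case: ifP => [/andP [s0 Y0]|].
    case: (eqVneq #|Yk k s| 1%N) => Y1; last by rewrite zerofE eqxx.
    rewrite basE; case: (t =P _) => [->|] // _.
    move/eqP: Y1 => /cards1P [y Yy]; rewrite Yy.
    apply/subsetP => x; rewrite !inE => /and3P [/orP [//|/andP [xy xs]] x0 cx].
    have : x \in Yk k s by rewrite inE xs x0 cx.
    by rewrite Yy inE (negPf xy).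
  rewrite basE; case: (t =P s) => [ets|] //; rewrite -ets t0 /= => /negbFE /eqP -> _.
  exact: sub0set.
move: Ps; rewrite /PB; case: ifP => [/andP [s0 Y0]|].
  case: (eqVneq #|Yk k s| 1%N) => Y1; last by rewrite zerofE eqxx.
  rewrite basE; case: (t =P _) => [->|] // _.
  apply: subset_trans (gv s s0 vs j jk); apply/subsetP => x.
  have [m0 cm] := Yk_mk Y0.
  rewrite !inE => /and3P [/orP [/eqP xm|/andP [_ xs]] x0 cx]; last by rewrite xs x0 cx.
  by move: cx; rewrite xm cm => /eqP ekj; move: jk; rewrite -ekj ltnn.
rewrite basE; case: (t =P s) => [ets|] // _ _.
by rewrite ets; apply: gv => //; rewrite -ets.
Qed.

Lemma normal_basis (s : S) : o \in s -> (forall j, Yk j s \subset [set mk j]) ->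
  lin psiB (phiB s) = bas s.
Proof.
move=> s0 N.
have rc : forall i, i \in s :\ o -> rho (c i) = i.
  move=> i; rewrite in_setD1 => /andP [i0 is_].
  have : i \in Yk (val (c i)) s by rewrite inE is_ i0 eqxx.
  by move/(subsetP (N _)); rewrite inE => /eqP e; rewrite /rho {2}e.
have nE : ~~ hasE A s.
  rewrite hasE_card negbK; apply/imset_injP => i j is_ js cij.
  by rewrite -(rc i is_) -(rc j js) cij.
have ts : tau (cl s) = s.
  rewrite /tau /cl -imset_comp (eq_in_imset (fun i => rc i)) imset_id.
  exact: setD1K.
have -> : phiB s = [ffun T => (-1) ^+ (#|s| - 1) * (T == cl s)%:R].
  by apply/ffunP => T; rewrite !ffunE s0 nE.
apply/ffunP=> t; rewrite lin_one ffunE ts basE card_cl_noE //.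
by rewrite mulrA sgn_sq mul1r.
Qed.

Lemma good_all (v : Vec n.+1) : good r v -> forall s : S, o \in s -> v s != 0 ->
  forall j, Yk j s \subset [set mk j].
Proof.
move=> gv s s0 vs j; case: (ltnP j r) => jr; first exact: gv.
apply/subsetP => x; rewrite inE => /and3P [_ _ /eqP cx].
by move: (ltn_ord (c x)); rewrite cx ltnNge jr.
Qed.

Lemma normal_psi (v : Vec n.+1) (t : S) : good r v -> o \in t ->
  lin psiB (lin phiB v) t = v t.
Proof.
move=> gv t0; rewrite lin_comp.
rewrite (lin_ext (G := fun s => if o \in s then bas s else 0)); last first.
  move=> s vs; case: ifP => s0; first by apply: normal_basis => //; exact: (good_all gv s0 vs).
  have -> : phiB s = 0 by apply/ffunP => T; rewrite !ffunE s0.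
  exact: lin0.
rewrite -{2}(lin_id v) !ffunE; apply: eq_bigr => s _.
by case: ifP => s0; rewrite ?ffunE //; case: (t =P s) => [e|]; rewrite ?mulr0 //; move: t0; rewrite e s0.
Qed.

Fixpoint Q (k : nat) (v : Vec n.+1) : Vec n.+1 := if k is k'.+1 then Pk k' (Q k' v) else v.

Lemma Q_chain k v : dQ (Q k v) = Q k (dQ v).
Proof. by elim: k => //= k IH; rewrite Pk_chain IH. Qed.
Lemma Q0 k : Q k 0 = 0.
Proof. by elim: k => //= k ->; apply: lin0. Qed.
Lemma phi_Pk k v : lin phiB (Pk k v) = lin phiB v.
Proof. by rewrite /Pk lin_comp; apply: lin_ext => s _; apply: phi_Pk_bas. Qed.
Lemma Q_phi k v : lin phiB (Q k v) = lin phiB v.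
Proof. by elim: k => //= k IH; rewrite phi_Pk IH. Qed.
Lemma Q_good k v : good k (Q k v).
Proof. by elim: k => [|k IH] /=; [move=> ? ? ? ? | apply: good_Pk]. Qed.
Lemma Q_homog k d v : homogD degA d v -> homogD degA d (Q k v).
Proof.
move=> hv; elim: k => //= k IH; rewrite -[d]addr0; apply: homog_lin IH.
exact: deg_PB.
Qed.
Lemma Q_coc k d v : dQ v = 0 -> homogD degA d v ->
  exists w, homogD degA (d - 1) w /\ v = Q k v + dQ w.
Proof.
move=> cv hv; elim: k => [|k [w [hw e]]] /=.
  by exists 0; split; [apply: homogD0 | rewrite /dQ lin0 addr0].
set u := Q k v.
have cu : dQ u = 0 by rewrite /u Q_chain cv Q0.
have hu := homotopy_v k u; rewrite cu /hk lin0 addr0 in hu.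
exists (hk k u + w); split.
  apply: homogDD => //; exact: (homog_lin (@deg_hB k) (Q_homog (k:=k) hv)).
rewrite /dQ linD -/dQ addrA -[hk k u]/(lin (hB k) u) -hu.
by rewrite addrCA subrr addr0.
Qed.

Lemma psi_chain_v (x : Vec r) : dQ (lin psiB x) = lin psiB (lin dGB x).
Proof. by rewrite /dQ !lin_comp; apply: lin_ext => T _; apply: psi_chain_bas. Qed.

Lemma phi_psi_v (y : Vec r) : lin phiB (lin psiB y) = y.
Proof.
by rewrite lin_comp -{2}(lin_id y); apply: lin_ext => T _; apply: phi_psi_bas.
Qed.

Lemma dQ_ext (u u' : Vec n.+1) : (forall s : S, o \in s -> u s = u' s) -> dQ u = dQ u'.
Proof.
move=> H; apply/ffunP=> t; rewrite !ffunE; apply: eq_bigr => s _.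
by case: (boolP (o \in s)) => s0; [rewrite H | rewrite dQB0 // !ffunE !mulr0].
Qed.

Lemma phi_ext (u u' : Vec n.+1) : (forall s : S, o \in s -> u s = u' s) ->
  lin phiB u = lin phiB u'.
Proof.
move=> H; apply/ffunP=> t; rewrite !ffunE; apply: eq_bigr => s _.
by case: (boolP (o \in s)) => s0; [rewrite H | rewrite !ffunE (negPf s0) !mulr0].
Qed.

Lemma phi_chain (v : Vec n.+1) : lin phiB (dQ v) = lin dGB (lin phiB v).
Proof.
rewrite -(Q_phi r (dQ v)) -Q_chain -(Q_phi r v).
set v' := Q r v.
have gv : good r v' by apply: Q_good.
rewrite (@dQ_ext v' (lin psiB (lin phiB v'))); last by move=> s s0; rewrite normal_psi.
by rewrite psi_chain_v phi_psi_v.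
Qed.

Lemma final :
  let W := (fullv : subspace l) in
  let x0 := A ord0 in
  let shift : int := (2 * codimIn W x0)%:Z - 1 in
  (forall v : Dcx n.+1, inDA' v -> phi A c v = 0) /\
  (forall v : Dcx n.+1, phi A c (dD W A v) = dD x0 g (phi A c v)) /\
  (forall (k : int) (v : Dcx n.+1),
      homog W A k v -> homog x0 g (k - shift) (phi A c v)) /\
  (forall (k : int) (v : Dcx n.+1),
      homog W A k v -> inDA' (dD W A v) ->
      (exists u : Dcx r, homog x0 g (k - shift - 1) u /\ phi A c v = dD x0 g u) ->
      exists w w' : Dcx n.+1,
        [/\ homog W A (k - 1) w, homog W A k w', inDA' w' & v = dD W A w + w']) /\
  (forall (k : int) (u : Dcx r),
      homog x0 g (k - shift) u -> dD x0 g u = 0 ->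
      exists (v : Dcx n.+1) (u' : Dcx r),
        [/\ homog W A k v, inDA' (dD W A v), homog x0 g (k - shift - 1) u'
          & u = phi A c v + dD x0 g u']).
Proof.
cbv zeta.
split.
  move=> v H; rewrite phiE; apply/ffunP => T; rewrite !ffunE big1 // => s _.
  by case: (boolP (o \in s)) => s0; [rewrite H // mul0r | rewrite ffunE (negPf s0) /= mulr0].
split.
  move=> v; rewrite !phiE dGE -phi_chain; apply: phi_ext => s s0.
  by rewrite dD_dQ.
split.
  by move=> k v hv; rewrite phiE; exact: (homog_lin deg_phiB hv).
split.
  move=> k v hv hdv [u [hu hpu]].
  have cv : dQ v = 0.
    apply/ffunP => t; case: (boolP (o \in t)) => t0; last by rewrite dQ_off // ffunE.
    by rewrite -dD_dQ // hdv // ffunE.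
  have [w [hw e]] := Q_coc r cv hv.
  have hpsi : homogD degA (k - 1) (lin psiB u).
    have E : k - 1 = k - shift - 1 + shift by rewrite addrAC subrK.
    by rewrite E; exact: (homog_lin deg_psiB hu).
  exists (lin psiB u + w), (v - dD fullv A (lin psiB u + w)); split.
  - exact: homogDD.
  - apply: homogDD => //; apply: homogDN; rewrite dDE -[k](subrK 1).
    exact: (homog_lin deg_dB (homogDD hpsi hw)).
  - move=> s s0; rewrite subfE dD_dQ // /dQ linD -/dQ addfE psi_chain_v -dGE -hpu phiE.
    rewrite -(Q_phi r v) (normal_psi (@Q_good r v) s0).
    by rewrite {1}e addfE subrr.
  - by rewrite addrC subrK.
move=> k u hu cu; exists (lin psiB u), 0; split.
- by rewrite -[k](subrK shift); exact: (homog_lin deg_psiB hu).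
- move=> s s0; rewrite dD_dQ // psi_chain_v -dGE cu lin0 ffunE //.
- exact: homogD0.
- by rewrite phiE phi_psi_v dGE lin0 addr0.
Qed.

End Main.

Theorem proposition3p5
  (l n r : nat) (A : 'I_n.+1 -> subspace l)
  (* A = {x_0,...,x_n} is a complex subspace arrangement (x_i = A i) *)
  (hA : forall i j : 'I_n.+1, i != j -> ~~ (A i <= A j)%VS)
  (* classes A_1,...,A_r of ~ on A' = A \ {x_0}, numbered by c *)
  (c : 'I_n.+1 -> 'I_r)
  (hc : forall i j : 'I_n.+1, i != ord0 -> j != ord0 ->
          (c i == c j) = (A ord0 :&: A i == A ord0 :&: A j)%VS)
  (hc_surj : forall k : 'I_r, exists2 i : 'I_n.+1, i != ord0 & c i = k)
  (* the order: elements of A_i precede those of A_j whenever i < j *)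
  (hc_order : forall i j : 'I_n.+1, i != ord0 -> j != ord0 ->
          (c i < c j)%N -> (i < j)%N)
  (* ~A'' = {x_0 /\ y}, its k-th member being x_0 /\ y for y in A_k *)
  (g : 'I_r -> subspace l)
  (hg : forall i : 'I_n.+1, i != ord0 -> g (c i) = (A ord0 :&: A i)%VS) :
  let W := (fullv : subspace l) in
  let x0 := A ord0 in
  let shift : int := (2 * codimIn W x0)%:Z - 1 in
  (* phi vanishes on D(A'), so phibar is well defined *)
  (forall v : Dcx n.+1, inDA' v -> phi A c v = 0) /\
  (* phibar commutes with the differentials *)
  (forall v : Dcx n.+1, phi A c (dD W A v) = dD x0 g (phi A c v)) /\
  (* phibar lowers degrees by 2 codim x0 - 1 *)
  (forall (k : int) (v : Dcx n.+1),
      homog W A k v -> homog x0 g (k - shift) (phi A c v)) /\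
  (* injective in cohomology of degree k *)
  (forall (k : int) (v : Dcx n.+1),
      homog W A k v -> inDA' (dD W A v) ->
      (exists u : Dcx r, homog x0 g (k - shift - 1) u /\ phi A c v = dD x0 g u) ->
      exists w w' : Dcx n.+1,
        [/\ homog W A (k - 1) w, homog W A k w', inDA' w' & v = dD W A w + w']) /\
  (* surjective in cohomology of degree k *)
  (forall (k : int) (u : Dcx r),
      homog x0 g (k - shift) u -> dD x0 g u = 0 ->
      exists (v : Dcx n.+1) (u' : Dcx r),
        [/\ homog W A k v, inDA' (dD W A v), homog x0 g (k - shift - 1) u'
          & u = phi A c v + dD x0 g u']).
Proof.
exact: (final hc hc_surj hc_order hg).
Qed.
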